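(* Let $\Sigma$ be a finite alphabet and $\Sigma^*$ the set of finite strings over $\Sigma$. Let $p$ and $q$ be probability distributions on $\Sigma^*$ with $p \ll q$ (i.e. $q(x)=0 \Rightarrow p(x)=0$). Let $X^{(1)},\dots,X^{(N)}$ be i.i.d. with law $q$, let $W \coloneqq p(X)/q(X)$ for $X\sim q$, and assume $\mathbb{E}_q[W^4]<\infty$. Define the importance resampling distribution $$\widehat{p}_N(x) \coloneqq \sum_{n=1}^N \frac{w^{(n)}}{\sum_{m=1}^N w^{(m)}}\,\mathbf{1}\{X^{(n)}=x\},\qquad w^{(n)} \coloneqq \frac{p(X^{(n)})}{q(X^{(n)})},$$ let $\overline{p}_N \coloneqq \mathbb{E}[\widehat{p}_N]$ (expectation over the samples), and let $\chi^2(p\|q)\coloneqq \mathbb{E}_q[(W-1)^2]$. Then, as $N\to\infty$: 1. $\|\overline{p}_N - p\|_1 = O\!\left(\sqrt{(1+\chi^2(p\|q))/N}\right)$; 2. $\|\overline{p}_N - p\|_2^2 = O\!\left((1+\chi^2(p\|q))/N\right)$; 3. $\mathbb{E}\big[\|\widehat{p}_N - p\|_2^2\big] = O\!\left((1+\chi^2(p\|q))/N\right)$.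
   Context: Norms are over functions on $\Sigma^*$: $\|f\|_1=\sum_{x\in\Sigma^*}|f(x)|$, $\|f\|_2^2=\sum_{x\in\Sigma^*} f(x)^2$. $\widehat{p}_N$ is a random probability distribution on $\Sigma^*$ (almost surely well-defined since the weights are positive with probability one on the support of $p$... more precisely the normalizer $\sum_m w^{(m)}$ is a.s. positive when needed). *)

(* Defs.v *)
(* Sums over the countable set Sigma^* (= seq S)
   and over the sample space (Sigma^* )^N are extended-real [esum]s of
   nonnegative terms. *)
From mathcomp Require Import all_boot all_order all_algebra.
From mathcomp Require Import all_classical all_reals all_analysis.
Set Implicit Arguments. Unset Strict Implicit. Unset Printing Implicit Defensive.
Import Order.TTheory GRing.Theory Num.Theory.
Local Open Scope classical_set_scope.
Local Open Scope ring_scope.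

Section Defs.
Variables (R : realType) (S : finType).

Definition is_distr (p : seq S -> R) : Prop :=
  (forall x, 0 <= p x) /\ (\esum_(x in [set: seq S]) (p x)%:E = 1%E).

Definition abs_cont (p q : seq S -> R) : Prop := forall x, q x = 0 -> p x = 0.

(* importance weight W(x) = p(x)/q(x) (only used where q(x) > 0) *)
Definition weight (p q : seq S -> R) (x : seq S) : R := p x / q x.

(* E_q[ F(W) ] for nonnegative F *)
Definition Eq_W (p q : seq S -> R) (F : R -> R) : \bar R :=
  \esum_(x in [set: seq S]) (q x * F (weight p q x))%:E.

Definition chi2 (p q : seq S -> R) : \bar R := Eq_W p q (fun w => (w - 1) ^+ 2).

(* importance resampling distribution for the sample s = (X^(1),...,X^(N));
   by MathComp's convention x/0 = 0 it is the zero function when all weights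
   vanish *)
Definition phat (p q : seq S -> R) (N : nat) (s : {ffun 'I_N -> seq S})
    (x : seq S) : R :=
  \sum_(n < N) (weight p q (s n) / \sum_(m < N) weight p q (s m))
               * ((s n == x)%:R).

Definition sample_prob (q : seq S -> R) (N : nat) (s : {ffun 'I_N -> seq S}) : R :=
  \prod_(n < N) q (s n).

Definition Esample (q : seq S -> R) (N : nat) (F : {ffun 'I_N -> seq S} -> \bar R)
    : \bar R :=
  \esum_(s in [set: {ffun 'I_N -> seq S}]) ((sample_prob q s)%:E * F s)%E.

(* pbar_N = E[phat_N] (pointwise; phat_N(x) in [0,1]) *)
Definition pbar (p q : seq S -> R) (N : nat) (x : seq S) : R :=
  fine (Esample q (fun s : {ffun 'I_N -> seq S} => (phat p q s x)%:E)).

Definition norm1 (f : seq S -> R) : \bar R :=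
  \esum_(x in [set: seq S]) (`|f x|)%:E.

Definition norm2sq (f : seq S -> R) : \bar R :=
  \esum_(x in [set: seq S]) (f x ^+ 2)%:E.

End Defs.

(* Main.v *)
Require Import Defs.
From mathcomp Require Import all_boot all_order all_algebra.
From mathcomp Require Import all_classical all_reals all_analysis.
From mathcomp Require Import ring lra.
Set Implicit Arguments. Unset Strict Implicit. Unset Printing Implicit Defensive.
Import Order.TTheory GRing.Theory Num.Theory.
Local Open Scope classical_set_scope.
Local Open Scope ring_scope.

Section G.
Variables (R : realType) (T : choiceType).
Local Open Scope ereal_scope.
Lemma esumZl (I : set T) (c : R) (a : T -> \bar R) : (0 <= c)%R ->
  (forall i, I i -> 0 <= a i) ->
  \esum_(i in I) (c%:E * a i) = c%:E * \esum_(i in I) a i.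
Proof.
move=> c0 a0; rewrite /esum -ereal_supZl //; last first.
  by apply/set0P; exists 0, set0; [exact: fsets_set0|rewrite fsbig_set0].
congr ereal_sup; apply/seteqP; split => y /=.
  move=> [A [finA AI] <-]; exists (\sum_(x \in A) a x); first by exists A.
  rewrite !fsbig_finite// !big_seq ge0_sume_distrr// => i.
  by rewrite in_fset_set// inE => /AI/a0.
move=> [z [A [finA AI] <-] <-]; exists A => //.
rewrite !fsbig_finite// !big_seq ge0_sume_distrr// => i.
by rewrite in_fset_set// inE => /AI/a0.
Qed.
Lemma esum_swap (T' : choiceType) (a : T -> T' -> \bar R) :
  (forall i j, 0 <= a i j) ->
  \esum_(i in [set: T]) \esum_(j in [set: T']) a i j =
  \esum_(j in [set: T']) \esum_(i in [set: T]) a i j.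
Proof.
move=> a0; rewrite (esum_esum (J := fun=> [set: T'])) //.
rewrite (esum_esum (J := fun=> [set: T])) //.
rewrite (reindex_esum ([set: T'] `*`` (fun=> [set: T])) ([set: T] `*`` (fun=> [set: T'])) (fun x => (x.2, x.1))) //.
split.
- by move=> [i j].
- by move=> [i1 i2] [j1 j2] _ _ [-> ->].
- by move=> [i j] _; exists (j, i).
Qed.

Lemma esum_single (t : T) (a : T -> \bar R) :
  (forall i, 0 <= a i) -> (forall i, i != t -> a i = 0) ->
  \esum_(i in [set: T]) a i = a t.
Proof.
move=> a0 az; rewrite (esumID [set t]) //.
rewrite setTI esum_set1 // esum1 ?adde0 // => i [_ /= it].
by apply: az; apply/eqP.
Qed.

End G.

Lemma ft_false : false = true -> False. Proof. by []. Qed.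
Section PL.
Variables (R : realType) (T : choiceType).

Definition consf N (y : T) (s : {ffun 'I_N -> T}) : {ffun 'I_N.+1 -> T} :=
  [ffun i => if unlift ord0 i is Some j then s j else y].

Lemma consf0 N y (s : {ffun 'I_N -> T}) : consf y s ord0 = y.
Proof. by rewrite ffunE unlift_none. Qed.
Lemma consfS N y (s : {ffun 'I_N -> T}) j : consf y s (lift ord0 j) = s j.
Proof. by rewrite ffunE liftK. Qed.

Lemma PL (q : T -> R) (q0 : forall y, 0 <= q y) N (f : 'I_N -> T -> R) (m : 'I_N -> R) :
  (forall n y, 0 <= f n y) ->
  (forall n, \esum_(y in [set: T]) (q y * f n y)%:E = (m n)%:E) ->
  \esum_(s in [set: {ffun 'I_N -> T}]) (\prod_(n < N) (q (s n) * f n (s n)))%:E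
  = (\prod_(n < N) m n)%:E.
Proof.
elim: N f m => [|N IH] f m f0 hm.
  pose s0 : {ffun 'I_0 -> T} := [ffun i : 'I_0 => False_rect T (ft_false (etrans (esym (ltn0 i)) (ltn_ord i)))].
  rewrite (_ : [set: {ffun 'I_0 -> T}] = [set s0]); last first.
    by apply/seteqP; split => s // _; apply/ffunP => -[].
  by rewrite esum_set1 ?big_ord0 // lee_fin big_ord0.
rewrite (reindex_esum ([set: T] `*`` (fun=> [set: {ffun 'I_N -> T}])) _ (fun ys => consf ys.1 ys.2)); last first.
  split.
  - by [].
  - move=> [y1 s1] [y2 s2] _ _ /= e.
    have -> : y1 = y2 by rewrite -(consf0 y1 s1) e consf0.
    congr pair; apply/ffunP => j.
    by rewrite -(consfS y1 s1 j) e consfS.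
  - move=> t _; exists (t ord0, [ffun j => t (lift ord0 j)]) => //=.
    apply/ffunP => i; rewrite ffunE; case: unliftP => [j ->|->] //.
    by rewrite ffunE.
rewrite -(esum_esum (J := fun=> [set: {ffun 'I_N -> T}]) (a := fun y s => (\prod_(n < N.+1) (q (consf y s n) * f n (consf y s n)))%:E)); last first.
  move=> y s _ _; rewrite lee_fin; apply: prodr_ge0 => i _.
  exact: mulr_ge0.
under eq_esum => y _.
  under eq_esum => s _ do
    rewrite big_ord_recl /= consf0 EFinM;
  over.
have m0 n : 0 <= m n.
  by rewrite -lee_fin -hm esum_ge0 // => y _; rewrite lee_fin mulr_ge0.
rewrite /=.
under eq_esum => y _.
  under eq_esum => s _ do under eq_bigr => i _ do rewrite consfS.
  rewrite esumZl; last 2 first.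
  - by rewrite mulr_ge0.
  - by move=> s _; rewrite lee_fin; apply: prodr_ge0 => i _; rewrite mulr_ge0.
  rewrite (IH (fun i => f (lift ord0 i)) (fun i => m (lift ord0 i))) //.
  rewrite muleC.
  over.
rewrite esumZl; last 2 first.
- by apply: prodr_ge0 => i _.
- by move=> y _; rewrite lee_fin mulr_ge0.
by rewrite hm big_ord_recl -EFinM mulrC.
Qed.
End PL.

Lemma pw3 (R : realType) (ph pt px z : R) : 0 <= ph -> ph <= 1 -> pt = z * ph ->
  (ph - px) ^+ 2 <= 2 * (pt - px) ^+ 2 + 2 * (z - 1) ^+ 2 * ph.
Proof.
move=> h0 h1 e.
have -> : ph - px = (pt - px) + ph * (1 - z) by rewrite e; ring.
have h2 := sqr_ge0 ((pt - px) - ph * (1 - z)).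
have h3 : ph * ph * (1 - z) ^+ 2 <= ph * (1 - z) ^+ 2.
  by rewrite ler_wpM2r ?sqr_ge0 //; nra.
have e2 : (z - 1) ^+ 2 = (1 - z) ^+ 2 by rewrite -sqrrN opprB.
rewrite e2; move: h2 h3; set a := pt - px; set b := 1 - z; rewrite !expr2 => h2 h3.
nra.
Qed.
Lemma pw1 (R : realType) (u r : R) : 0 < r -> `|u| <= (2 * r)^-1 * u ^+ 2 + r / 2.
Proof.
move=> r0; have h := sqr_ge0 (`|u| - r).
rewrite -(ler_pM2l (_ : 0 < 2 * r)); last by rewrite mulr_gt0.
rewrite mulrDr mulrA divff ?mul1r; last by rewrite mulf_neq0 // gt_eqF.
have hu : `|u| * `|u| = u * u by rewrite -!expr2 real_normK ?num_real.
rewrite !expr2 in h *.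
have -> : 2 * r * (r / 2) = r * r by field.
nra.
Qed.

Section Main.
Variables (R : realType) (S : finType) (p q : seq S -> R).
Hypotheses (hp : is_distr p) (hq : is_distr q) (hac : abs_cont p q).
Local Notation T := (seq S).
Local Notation w := (weight p q).

Lemma q_ge0 y : 0 <= q y. Proof. by case: hq. Qed.
Lemma p_ge0 y : 0 <= p y. Proof. by case: hp. Qed.
Lemma w_ge0 y : 0 <= w y. Proof. by rewrite /weight divr_ge0 ?q_ge0 ?p_ge0. Qed.
Lemma qw y : q y * w y = p y.
Proof.
rewrite /weight; have [hq0|qn0] := eqVneq (q y) 0; first by rewrite hq0 mul0r hac.
by rewrite mulrCA divff ?mulr1.
Qed.

Definition Eq (g : T -> R) : \bar R := \esum_(y in [set: T]) (q y * g y)%:E.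

Lemma Eq1 : Eq (fun=> 1) = 1%E.
Proof. by rewrite /Eq; under eq_esum do rewrite mulr1; case: hq. Qed.
Lemma Eqw : Eq w = 1%E.
Proof. by rewrite /Eq; under eq_esum do rewrite qw; case: hp. Qed.

Definition P N (s : {ffun 'I_N -> T}) := \prod_(n < N) q (s n).
Lemma P_ge0 N (s : {ffun 'I_N -> T}) : 0 <= P s.
Proof. by apply: prodr_ge0 => i _; exact: q_ge0. Qed.

Lemma Esample_E N (F : {ffun 'I_N -> T} -> \bar R) :
  Esample q F = \esum_(s in [set: {ffun 'I_N -> T}]) ((P s)%:E * F s)%E.
Proof. by []. Qed.

Lemma ES_le N (F G : {ffun 'I_N -> T} -> \bar R) : (forall s, F s <= G s)%E ->
  (Esample q F <= Esample q G)%E.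
Proof.
move=> h; apply: le_esum => s _; apply: lee_wpmul2l; last exact: h.
by rewrite lee_fin; exact: P_ge0.
Qed.

Lemma ES_D N (F G : {ffun 'I_N -> T} -> \bar R) : (forall s, 0 <= F s)%E ->
  (forall s, 0 <= G s)%E ->
  Esample q (fun s => F s + G s)%E = (Esample q F + Esample q G)%E.
Proof.
move=> F0 G0; rewrite /Esample -esumD; last 2 first.
- by move=> s _; rewrite mule_ge0 ?lee_fin ?P_ge0.
- by move=> s _; rewrite mule_ge0 ?lee_fin ?P_ge0.
by apply: eq_esum => s _; rewrite ge0_muleDr.
Qed.

Lemma ES_Z N (c : R) (F : {ffun 'I_N -> T} -> \bar R) : 0 <= c -> (forall s, 0 <= F s)%E ->
  Esample q (fun s => c%:E * F s)%E = (c%:E * Esample q F)%E.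
Proof.
move=> c0 F0; rewrite /Esample -esumZl //; last first.
  by move=> s _; rewrite mule_ge0 ?lee_fin ?P_ge0.
by apply: eq_esum => s _; rewrite muleCA.
Qed.

Lemma ES_sum N M (F : 'I_M -> {ffun 'I_N -> T} -> \bar R) : (forall i s, 0 <= F i s)%E ->
  Esample q (fun s => \sum_(i < M) F i s)%E = (\sum_(i < M) Esample q (F i))%E.
Proof.
move=> F0; rewrite /Esample -esum_sum; last first.
  by move=> s i _ _; rewrite mule_ge0 ?lee_fin ?P_ge0.
by apply: eq_esum => s _; rewrite ge0_sume_distrr.
Qed.

Lemma ES_swap N (G : {ffun 'I_N -> T} -> T -> \bar R) : (forall s x, 0 <= G s x)%E ->
  Esample q (fun s => \esum_(x in [set: T]) G s x)%E =
  \esum_(x in [set: T]) Esample q (fun s => G s x).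
Proof.
move=> G0; rewrite /Esample -esum_swap; last first.
  by move=> s x; rewrite mule_ge0 ?lee_fin ?P_ge0.
by apply: eq_esum => s _; rewrite esumZl ?P_ge0.
Qed.

Lemma ES_PL N (f : 'I_N -> T -> R) (m : 'I_N -> R) :
  (forall n y, 0 <= f n y) -> (forall n, Eq (f n) = (m n)%:E) ->
  Esample q (fun s => (\prod_(n < N) f n (s n))%:E) = (\prod_(n < N) m n)%:E.
Proof.
move=> f0 hm; rewrite /Esample -(PL q_ge0 f0 hm).
by apply: eq_esum => s _; rewrite -EFinM /P big_split.
Qed.

Lemma ES1 N : Esample q (fun s : {ffun 'I_N -> T} => 1%E) = 1%E.
Proof.
have := @ES_PL N (fun _ _ => 1) (fun _ => 1) (fun _ _ => ler01) (fun _ => Eq1).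
by rewrite !big1.
Qed.

Lemma ES_one N (n : 'I_N) (g : T -> R) mu : (forall y, 0 <= g y) -> Eq g = mu%:E ->
  Esample q (fun s => (g (s n))%:E) = mu%:E.
Proof.
move=> g0 hg.
transitivity (Esample q (fun s => (\prod_(i < N) (if i == n then g else fun=> 1) (s i))%:E)).
  congr Esample; apply/funext => s; congr EFin.
  by rewrite (bigD1 n) //= eqxx big1 ?mulr1 // => i /negbTE ->.
rewrite (ES_PL (f := fun i => if i == n then g else fun=> 1) (m := fun i => if i == n then mu else 1)).
- by rewrite (bigD1 n) //= eqxx big1 ?mulr1 // => i /negbTE ->.
- by move=> i y; case: ifP => // _; exact: ler01.
- by move=> i; case: ifP => _ //; exact: Eq1.
Qed.

Lemma ES_two N (n m : 'I_N) (g h : T -> R) mu nu : n != m ->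
  (forall y, 0 <= g y) -> Eq g = mu%:E ->
  (forall y, 0 <= h y) -> Eq h = nu%:E ->
  Esample q (fun s => (g (s n) * h (s m))%:E) = (mu * nu)%:E.
Proof.
move=> nm g0 hg h0 hh.
pose f i := if i == n then g else if i == m then h else fun=> 1.
pose mm i := if i == n then mu else if i == m then nu else 1.
have e (U : Type) (F : 'I_N -> U -> R) (u : 'I_N -> U) :
    F n (u n) * F m (u m) * \prod_(i < N | (i != n) && (i != m)) F i (u i) = \prod_(i < N) F i (u i).
  rewrite [RHS](bigD1 n) //= (bigD1 m (P := fun i => i != n)) /=; last by rewrite eq_sym.
  by rewrite mulrA.
transitivity (Esample q (fun s => (\prod_(i < N) f i (s i))%:E)).
  congr Esample; apply/funext => s; congr EFin.
  rewrite -(e _ f s) /f eqxx (eq_sym m n) (negbTE nm) eqxx.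
  by rewrite big1 ?mulr1 // => i /andP[/negbTE -> /negbTE ->].
rewrite (ES_PL (f := f) (m := mm)).
- rewrite -(e _ (fun i _ => mm i) (fun=> tt)) /mm eqxx (eq_sym m n) (negbTE nm) eqxx.
  by rewrite big1 ?mulr1 // => i /andP[/negbTE -> /negbTE ->].
- by move=> i y; rewrite /f; case: ifP => // _; case: ifP => // _; exact: ler01.
- by move=> i; rewrite /f /mm; case: ifP => _ //; case: ifP => _ //; exact: Eq1.
Qed.

Lemma ES_ge0 N (F : {ffun 'I_N -> T} -> \bar R) : (forall s, 0 <= F s)%E ->
  (0 <= Esample q F)%E.
Proof. by move=> F0; apply: esum_ge0 => s _; rewrite mule_ge0 ?lee_fin ?P_ge0. Qed.

Lemma ES_cst N (c : R) : 0 <= c ->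
  Esample q (fun s : {ffun 'I_N -> T} => c%:E) = c%:E.
Proof.
move=> c0; transitivity (Esample q (fun s : {ffun 'I_N -> T} => c%:E * 1)%E).
  by congr Esample; apply/funext => s; rewrite mule1.
by rewrite ES_Z // ?ES1 ?mule1 // => s; exact: lee01.
Qed.

Lemma sum_if_eq N (n : 'I_N) (a b : R) :
  \sum_(m < N) (if n == m then a else b) = a + (N%:R - 1) * b.
Proof.
rewrite (eq_bigr (fun m => b + (n == m)%:R * (a - b))); last first.
  by move=> m _; case: eqP => _; rewrite ?mul1r ?mul0r ?addr0 //; rewrite addrC subrK.
rewrite big_split /= sumr_const card_ord (bigD1 n) //= eqxx mul1r big1 ?addr0; last first.
  by move=> m; rewrite eq_sym => /negbTE ->; rewrite mul0r.
by rewrite -mulr_natr; ring.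
Qed.

Lemma Eq_ge0 g : (forall y, 0 <= g y) -> (0 <= Eq g)%E.
Proof. by move=> g0; apply: esum_ge0 => y _; rewrite lee_fin mulr_ge0 ?q_ge0. Qed.

Lemma ES_mean N (g : T -> R) mu : (0 < N)%N -> (forall y, 0 <= g y) -> Eq g = mu%:E ->
  Esample q (fun s : {ffun 'I_N -> T} => ((\sum_(n < N) g (s n)) / N%:R)%:E) = mu%:E.
Proof.
move=> N0 g0 hg.
transitivity (Esample q (fun s : {ffun 'I_N -> T} => (N%:R^-1)%:E * \sum_(n < N) (g (s n))%:E)%E).
  by congr Esample; apply/funext => s; rewrite sumEFin -EFinM mulrC.
rewrite ES_Z ?invr_ge0 ?ler0n //; last by move=> s; rewrite sume_ge0 // => n _; rewrite lee_fin.
rewrite ES_sum; last by move=> n s; rewrite lee_fin.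
under eq_bigr => n _ do rewrite (ES_one n g0 hg).
rewrite sumEFin sumr_const card_ord -EFinM; congr EFin.
have N0' : (N%:R : R) != 0 by rewrite pnatr_eq0 -lt0n.
by rewrite -mulr_natr; field.
Qed.

Lemma ES_sq N (g : T -> R) mu nu : (0 < N)%N -> (forall y, 0 <= g y) -> Eq g = mu%:E ->
  Eq (fun y => g y ^+ 2) = nu%:E ->
  Esample q (fun s : {ffun 'I_N -> T} => (((\sum_(n < N) g (s n)) / N%:R) ^+ 2)%:E)
  = ((nu + (N%:R - 1) * mu ^+ 2) / N%:R)%:E.
Proof.
move=> N0 g0 hg hg2.
have N0' : (N%:R : R) != 0 by rewrite pnatr_eq0 -lt0n.
transitivity (Esample q (fun s : {ffun 'I_N -> T} =>
   ((N%:R ^+ 2)^-1)%:E * \sum_(n < N) \sum_(m < N) (g (s n) * g (s m))%:E)%E).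
  congr Esample; apply/funext => s; under [in RHS]eq_bigr do rewrite sumEFin.
  rewrite sumEFin -EFinM; congr EFin.
  rewrite expr_div_n mulrC; congr (_ * _).
  rewrite expr2 big_distrl /=; apply: eq_bigr => n _; by rewrite big_distrr.
rewrite (ES_Z (F := fun s => (\sum_(n < N) \sum_(m < N) (g (s n) * g (s m))%:E)%E)) ?invr_ge0 ?exprn_ge0 ?ler0n //; last first.
  by move=> s; rewrite !sume_ge0 // => n _; rewrite sume_ge0 // => m _; rewrite lee_fin mulr_ge0.
rewrite ES_sum; last by move=> n s; rewrite sume_ge0 // => m _; rewrite lee_fin mulr_ge0.
under eq_bigr => n _.
  rewrite ES_sum; last by move=> m s; rewrite lee_fin mulr_ge0.
  under eq_bigr => m _.
    have -> : Esample q (fun s : {ffun 'I_N -> T} => (g (s n) * g (s m))%:E) =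
              (if n == m then nu else mu * mu)%:E.
      case: eqP => [<-|/eqP nm]; last exact: ES_two.
      by rewrite -(ES_one n (g := fun y => g y ^+ 2)) // => y; rewrite exprn_ge0.
    over.
  rewrite sumEFin sum_if_eq.
  over.
rewrite sumEFin sumr_const card_ord -EFinM; congr EFin.
rewrite -mulr_natr; field; exact: N0'.
Qed.

Lemma ES_var N (g : T -> R) mu nu : (0 < N)%N -> (forall y, 0 <= g y) -> Eq g = mu%:E ->
  Eq (fun y => g y ^+ 2) = nu%:E ->
  Esample q (fun s : {ffun 'I_N -> T} => (((\sum_(n < N) g (s n)) / N%:R - mu) ^+ 2)%:E)
  = ((nu - mu ^+ 2) / N%:R)%:E.
Proof.
move=> N0 g0 hg hg2.
have N0' : (N%:R : R) != 0 by rewrite pnatr_eq0 -lt0n.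
have mu0 : 0 <= mu by rewrite -lee_fin -hg Eq_ge0.
set Y := fun s : {ffun 'I_N -> T} => (\sum_(n < N) g (s n)) / N%:R.
have Y0 s : 0 <= Y s by rewrite divr_ge0 ?ler0n // sumr_ge0.
have key : Esample q (fun s => ((Y s - mu) ^+ 2)%:E + (2 * mu)%:E * (Y s)%:E)%E =
           Esample q (fun s => ((Y s) ^+ 2)%:E + (mu ^+ 2)%:E)%E.
  by congr Esample; apply/funext => s; rewrite -EFinM -!EFinD; congr EFin; rewrite /Y; ring.
rewrite ES_D in key; last 2 first.
- by move=> s; rewrite lee_fin sqr_ge0.
- by move=> s; rewrite -EFinM lee_fin; apply: mulr_ge0 (Y0 s); apply: mulr_ge0.
rewrite ES_D in key; last 2 first.
- by move=> s; rewrite lee_fin sqr_ge0.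
- by move=> s; rewrite lee_fin sqr_ge0.
rewrite ES_cst ?sqr_ge0 // (ES_sq N0 g0 hg hg2) in key.
rewrite ES_Z in key; last 2 first.
- by apply: mulr_ge0.
- by move=> s; rewrite lee_fin Y0.
rewrite (ES_mean N0 g0 hg) in key.
move: key; set X := Esample _ _.
have X0 : (0 <= X)%E by apply: ES_ge0 => s; rewrite lee_fin sqr_ge0.
case: X X0 => [r| |] // _ key.
  move: key; rewrite -EFinM -EFinD -EFinD => -[e]; congr EFin.
apply: (@addIr _ (2 * mu * mu)); rewrite e; field; exact: N0'.
Qed.

Definition SW N (s : {ffun 'I_N -> T}) := \sum_(n < N) w (s n).
Definition gx (x : T) (y : T) := w y * (y == x)%:R.
Definition Aff N (s : {ffun 'I_N -> T}) x := \sum_(n < N) gx x (s n).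

Lemma gx_ge0 x y : 0 <= gx x y.
Proof. by rewrite /gx mulr_ge0 ?w_ge0 ?ler0n. Qed.
Lemma SW_ge0 N (s : {ffun 'I_N -> T}) : 0 <= SW s.
Proof. by rewrite sumr_ge0 // => n _; exact: w_ge0. Qed.
Lemma Aff_ge0 N (s : {ffun 'I_N -> T}) x : 0 <= Aff s x.
Proof. by rewrite sumr_ge0 // => n _; exact: gx_ge0. Qed.
Lemma Aff_le N (s : {ffun 'I_N -> T}) x : Aff s x <= SW s.
Proof.
apply: ler_sum => n _; rewrite /gx; case: eqP => _; rewrite ?mulr1 ?mulr0 //.
exact: w_ge0.
Qed.

Lemma phatE N (s : {ffun 'I_N -> T}) x : phat p q s x = Aff s x / SW s.
Proof.
rewrite /phat /Aff /gx mulr_suml; apply: eq_bigr => n _; by rewrite mulrAC.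
Qed.

Lemma phat_ge0 N (s : {ffun 'I_N -> T}) x : 0 <= phat p q s x.
Proof. by rewrite phatE divr_ge0 ?Aff_ge0 ?SW_ge0. Qed.

Lemma phat_le1 N (s : {ffun 'I_N -> T}) x : phat p q s x <= 1.
Proof.
rewrite phatE; have [->|h] := eqVneq (SW s) 0; first by rewrite invr0 mulr0 ler01.
have h' : 0 < SW s by rewrite lt0r h SW_ge0.
by rewrite ler_pdivrMr // mul1r Aff_le.
Qed.

Lemma phat_esum N (s : {ffun 'I_N -> T}) :
  (\esum_(x in [set: T]) (phat p q s x)%:E <= 1)%E.
Proof.
rewrite /phat; under eq_esum do rewrite -sumEFin.
rewrite esum_sum; last first.
  move=> x n _ _; rewrite lee_fin mulr_ge0 ?ler0n // divr_ge0 ?w_ge0 //.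
  exact: SW_ge0.
rewrite (eq_bigr (fun n => (w (s n) / SW s)%:E)); last first.
  move=> n _; rewrite (esum_single (t := s n)).
  - by rewrite eqxx mulr1.
  - by move=> x; rewrite lee_fin mulr_ge0 ?ler0n // divr_ge0 ?w_ge0 // SW_ge0.
  - by move=> x; rewrite eq_sym => /negbTE ->; rewrite mulr0.
rewrite sumEFin -mulr_suml lee_fin.
have [->|h] := eqVneq (SW s) 0; first by rewrite invr0 mulr0 ler01.
by rewrite -/(SW s) divff.
Qed.

Definition Zs N (s : {ffun 'I_N -> T}) := SW s / N%:R.
Definition ptil N (s : {ffun 'I_N -> T}) x := Aff s x / N%:R.

Lemma ptil_Z N (s : {ffun 'I_N -> T}) x : ptil s x = Zs s * phat p q s x.
Proof.
rewrite phatE /ptil /Zs.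
have [h|h] := eqVneq (SW s) 0.
  have : Aff s x = 0 by apply/eqP; rewrite eq_le Aff_ge0 -h Aff_le.
  by move=> ->; rewrite h !mul0r.
by rewrite [in RHS](mulrC (Aff s x)) mulrACA divff // mul1r mulrC.
Qed.

Lemma Eq_gx x : Eq (gx x) = (p x)%:E.
Proof.
rewrite /Eq (esum_single (t := x)).
- by rewrite /gx eqxx mulr1 qw.
- by move=> y; rewrite lee_fin mulr_ge0 ?q_ge0 ?gx_ge0.
- by move=> y /negbTE h; rewrite /gx h mulr0 mulr0.
Qed.

Lemma Eq_gx2 x : Eq (fun y => gx x y ^+ 2) = (q x * w x ^+ 2)%:E.
Proof.
rewrite /Eq (esum_single (t := x)).
- by rewrite /gx eqxx mulr1.
- by move=> y; rewrite lee_fin mulr_ge0 ?q_ge0 ?sqr_ge0.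
- by move=> y /negbTE h; rewrite /gx h mulr0 expr0n mulr0.
Qed.

Lemma fin_of_bounds (x : \bar R) (b : R) : (0 <= x)%E -> (x <= b%:E)%E ->
  exists r, x = r%:E /\ r <= b.
Proof. by case: x => [r| |] // _; rewrite lee_fin => h; exists r. Qed.

Lemma Eq_le f g : (forall y, f y <= g y) -> (Eq f <= Eq g)%E.
Proof. by move=> h; apply: le_esum => y _; rewrite lee_fin ler_wpM2l ?q_ge0. Qed.

Lemma Eq_add f g : (forall y, 0 <= f y) -> (forall y, 0 <= g y) ->
  Eq (fun y => f y + g y) = (Eq f + Eq g)%E.
Proof.
move=> f0 g0; rewrite /Eq -esumD; last 2 first.
- by move=> y _; rewrite lee_fin mulr_ge0 ?q_ge0.
- by move=> y _; rewrite lee_fin mulr_ge0 ?q_ge0.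
by apply: eq_esum => y _; rewrite mulrDr EFinD.
Qed.

Lemma Eq_scale (c : R) f : 0 <= c -> (forall y, 0 <= f y) ->
  Eq (fun y => c * f y) = (c%:E * Eq f)%E.
Proof.
move=> c0 f0; rewrite /Eq -esumZl //; last by move=> y _; rewrite lee_fin mulr_ge0 ?q_ge0.
by apply: eq_esum => y _; rewrite mulrCA EFinM.
Qed.

Lemma moments : (Eq_W p q (fun u : R => (u ^+ 4)%R) < +oo)%E ->
  0 <= fine (chi2 p q) /\ chi2 p q = (fine (chi2 p q))%:E /\
  exists M2, Eq (fun y => w y ^+ 2) = M2%:E /\ M2 <= 2 * (1 + fine (chi2 p q)).
Proof.
move=> h4.
have [r4 [e4 _]] : exists r4, Eq_W p q (fun u : R => (u ^+ 4)%R) = r4%:E /\ r4 <= r4.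
  have : (0 <= Eq (fun y => (w y ^+ 4)%R))%E by apply: Eq_ge0 => y; rewrite exprn_ge0 ?w_ge0.
  rewrite /Eq /Eq_W in h4 *.
  move: h4; case: (esum _ _) => [r| |] //; by exists r.
have hc : (chi2 p q <= (r4 + 2)%:E)%E.
  rewrite -(mulr1 2) EFinD -e4 EFinM -Eq1 -Eq_scale ?ler0n // -Eq_add; last 2 first.
  - by move=> y; rewrite exprn_ge0 ?w_ge0.
  - by move=> y; rewrite mulr1 ler0n.
  apply: Eq_le => y; rewrite mulr1.
  have := w_ge0 y; set u := w y => u0.
  nra.
have [c2 [ec2 _]] := fin_of_bounds (Eq_ge0 (fun y => sqr_ge0 (w y - 1))) hc.
have ec2' : chi2 p q = c2%:E by [].
have c20 : 0 <= c2 by rewrite -lee_fin -ec2' (Eq_ge0 (fun y => sqr_ge0 (w y - 1))).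
rewrite ec2' /=; split => //; split => //.
have hm : (Eq (fun y => (w y ^+ 2)%R) <= (2 * (1 + c2))%:E)%E.
  apply: (@le_trans _ _ (Eq (fun y => 2 * (w y - 1) ^+ 2 + 2 * 1)%R)).
    apply: Eq_le => y; set u := w y; have := sqr_ge0 (u - 2).
    rewrite !expr2; nra.
  rewrite Eq_add; last 2 first.
  - by move=> y; rewrite mulr_ge0 ?sqr_ge0.
  - by move=> y; rewrite mulr1.
  rewrite (Eq_scale (f := fun y => ((w y - 1) ^+ 2)%R)) //; last by move=> y; exact: sqr_ge0.
  rewrite (Eq_scale (f := fun=> 1%R)) // Eq1 ec2 mule1 -EFinM -EFinD lee_fin.
  lra.
have [M2 [eM2 hM2]] := fin_of_bounds (Eq_ge0 (fun y => sqr_ge0 (w y))) hm.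
by exists M2.
Qed.

Lemma claim2_gen (f : T -> R) (B : R) : (norm1 f <= B%:E)%E -> (norm2sq f <= (B * B)%:E)%E.
Proof.
move=> h.
have hx x : `|f x| <= B.
  rewrite -lee_fin (le_trans _ h) //; apply: esum_ge; exists [set x].
    by split; [exact: finite_set1|].
  by rewrite fsbig_set1.
have B0 : 0 <= B by apply: le_trans (hx [::]).
rewrite /norm2sq.
apply: (le_trans (le_esum (b := fun x => (B%:E * (`|f x|)%:E)%E) _)).
  move=> x _; rewrite -EFinM lee_fin -real_normK ?num_real // expr2.
  by apply: ler_wpM2r => //.
rewrite (esumZl B0); last by move=> x _; rewrite lee_fin.
by rewrite EFinM; apply: lee_wpmul2l; rewrite ?lee_fin.
Qed.

Section Claims.
Variables (N : nat) (N0 : (0 < N)%N) (M2 : R)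
  (eM2 : Eq (fun y => w y ^+ 2) = M2%:E).

Let N0' : (N%:R : R) != 0. Proof. by rewrite pnatr_eq0 -lt0n. Qed.

Lemma Z_var : Esample q (fun s : {ffun 'I_N -> T} => ((Zs s - 1) ^+ 2)%:E) = ((M2 - 1) / N%:R)%:E.
Proof. by have := ES_var N0 w_ge0 Eqw eM2; rewrite expr1n. Qed.

Lemma ptil_var x : Esample q (fun s : {ffun 'I_N -> T} => ((ptil s x - p x) ^+ 2)%:E)
  = ((q x * w x ^+ 2 - p x ^+ 2) / N%:R)%:E.
Proof. exact: (ES_var N0 (gx_ge0 x) (Eq_gx x) (Eq_gx2 x)). Qed.

Lemma ptil_mean x : Esample q (fun s : {ffun 'I_N -> T} => (ptil s x)%:E) = (p x)%:E.
Proof. exact: (ES_mean N0 (gx_ge0 x) (Eq_gx x)). Qed.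

Lemma claim3 : (Esample q (fun s : {ffun 'I_N -> T} => norm2sq (fun x => (phat p q s x - p x)%R))
   <= (4 * M2 / N%:R)%:E)%E.
Proof.
apply: (le_trans (ES_le (G := fun s => (2%:E * (\esum_(x in [set: T]) ((ptil s x - p x) ^+ 2)%:E)
      + 2%:E * ((Zs s - 1) ^+ 2)%:E)%E) _)).
  move=> s; rewrite /norm2sq.
  apply: (le_trans (le_esum (b := fun x => ((2 * (ptil s x - p x) ^+ 2)%:E +
      (2 * (Zs s - 1) ^+ 2)%:E * (phat p q s x)%:E)%E) _)).
    move=> x _; rewrite -EFinM -EFinD lee_fin.
    by apply: pw3; rewrite ?phat_ge0 ?phat_le1 ?ptil_Z.
  rewrite esumD; last 2 first.
  - by move=> x _; rewrite lee_fin mulr_ge0 ?sqr_ge0.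
  - by move=> x _; rewrite -EFinM lee_fin mulr_ge0 ?phat_ge0 // mulr_ge0 ?sqr_ge0.
  apply: leeD.
    rewrite -esumZl //; last by move=> x _; rewrite lee_fin sqr_ge0.
  rewrite esumZl; last 2 first.
  - by rewrite mulr_ge0 ?sqr_ge0.
  - by move=> x _; rewrite lee_fin phat_ge0.
  rewrite EFinM -muleA; apply: lee_wpmul2l => //.
  rewrite -[X in (_ <= X)%E]mule1; apply: lee_wpmul2l; first by rewrite lee_fin sqr_ge0.
  exact: phat_esum.
rewrite ES_D; last 2 first.
- by move=> s; rewrite mule_ge0 // esum_ge0 // => x _; rewrite lee_fin sqr_ge0.
- by move=> s; rewrite mule_ge0 // lee_fin sqr_ge0.
rewrite ES_Z //; last by move=> s; rewrite esum_ge0 // => x _; rewrite lee_fin sqr_ge0.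
rewrite ES_Z //; last by move=> s; rewrite lee_fin sqr_ge0.
rewrite ES_swap; last by move=> s x; rewrite lee_fin sqr_ge0.
rewrite Z_var.
under eq_esum do rewrite ptil_var.
apply: (@le_trans _ _ (2%:E * (N%:R^-1 * M2)%:E + 2%:E * ((M2 - 1) / N%:R)%:E)%E).
  apply: leeD => //; apply: lee_wpmul2l => //.
  rewrite EFinM -eM2 -esumZl ?invr_ge0 ?ler0n //; last first.
    by move=> y _; rewrite lee_fin mulr_ge0 ?q_ge0 ?sqr_ge0.
  apply: le_esum => x _; rewrite -EFinM lee_fin mulrC; apply: ler_wpM2l.
    by rewrite invr_ge0 ler0n.
  by rewrite lerBlDr lerDl sqr_ge0.
rewrite -!EFinM -EFinD lee_fin.
have Np : (0 < (N%:R : R)) by rewrite ltr0n.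
rewrite -!mulrA -mulrDr (mulrC (N%:R^-1)) -mulrDl.
by rewrite !mulrA ler_pM2r ?invr_gt0 //; lra.
Qed.

Lemma bias_pt x : (`|pbar p q N x - p x|%:E <=
  Esample q (fun s : {ffun 'I_N -> T} => (phat p q s x * `|Zs s - 1|)%:E))%E.
Proof.
set D := Esample _ _.
have D0 : (0 <= D)%E by apply: ES_ge0 => s; rewrite lee_fin mulr_ge0 ?phat_ge0.
have h1 : (Esample q (fun s : {ffun 'I_N -> T} => (phat p q s x)%:E) <= (p x)%:E + D)%E.
  rewrite -ptil_mean /D -ES_D; last 2 first.
  - by move=> s; rewrite lee_fin /ptil divr_ge0 ?Aff_ge0.
  - by move=> s; rewrite lee_fin mulr_ge0 ?phat_ge0.
  apply: ES_le => s; rewrite -EFinD lee_fin ptil_Z.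
  have := phat_ge0 s x; set ph := phat p q s x => ph0.
  rewrite -lerBlDl -{1}(mul1r ph) -mulrBl mulrC; apply: ler_wpM2l => //.
  by rewrite distrC ler_norm.
have h2 : ((p x)%:E <= Esample q (fun s : {ffun 'I_N -> T} => (phat p q s x)%:E) + D)%E.
  rewrite -ptil_mean /D -ES_D; last 2 first.
  - by move=> s; rewrite lee_fin phat_ge0.
  - by move=> s; rewrite lee_fin mulr_ge0 ?phat_ge0.
  apply: ES_le => s; rewrite -EFinD lee_fin ptil_Z.
  have := phat_ge0 s x; set ph := phat p q s x => ph0.
  rewrite -lerBlDl -{2}(mul1r ph) -mulrBl mulrC; apply: ler_wpM2l => //.
  by rewrite ler_norm.
have Eph0 : (0 <= Esample q (fun s : {ffun 'I_N -> T} => (phat p q s x)%:E))%E.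
  by apply: ES_ge0 => s; rewrite lee_fin phat_ge0.
have Eph1 : (Esample q (fun s : {ffun 'I_N -> T} => (phat p q s x)%:E) <= 1%:E)%E.
  by rewrite -(ES_cst N ler01); apply: ES_le => s; rewrite lee_fin phat_le1.
have [e [ee _]] := fin_of_bounds Eph0 Eph1.
rewrite /pbar ee /= in h1 h2 *.
clearbody D; move: D0 h1 h2; case: D => [d| |] //; last first.
  by move=> *; rewrite leey.
rewrite -!EFinD !lee_fin => _ h1 h2.
by rewrite ler_norml; apply/andP; split; lra.
Qed.

Lemma claim1 (r : R) : 0 < r ->
  (norm1 (fun x => (pbar p q N x - p x)%R) <= ((2 * r)^-1 * ((M2 - 1) / N%:R) + r / 2)%:E)%E.
Proof.
move=> r0; rewrite /norm1.
apply: (le_trans (le_esum (b := fun x => Esample q (fun s : {ffun 'I_N -> T} => (phat p q s x * `|Zs s - 1|)%:E)) _)).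
  by move=> x _; exact: bias_pt.
rewrite -ES_swap; last by move=> s x; rewrite lee_fin mulr_ge0 ?phat_ge0.
apply: (le_trans (ES_le (G := fun s => (`|Zs s - 1|)%:E) _)).
  move=> s; under eq_esum do rewrite mulrC EFinM.
  rewrite esumZl //; last by move=> x _; rewrite lee_fin phat_ge0.
  rewrite -[X in (_ <= X)%E]mule1; apply: lee_wpmul2l => //; exact: phat_esum.
apply: (le_trans (ES_le (G := fun s => ((2 * r)^-1%:E * ((Zs s - 1) ^+ 2)%:E + (r / 2)%:E)%E) _)).
  by move=> s; rewrite -EFinM -EFinD lee_fin; apply: pw1.
have r0' : 0 <= r by exact: ltW.
rewrite ES_D; last 2 first.
- by move=> s; rewrite -EFinM lee_fin mulr_ge0 ?invr_ge0 ?sqr_ge0 ?mulr_ge0.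
- by move=> s; rewrite lee_fin divr_ge0.
rewrite ES_Z ?invr_ge0 ?mulr_ge0 //; last by move=> s; rewrite lee_fin sqr_ge0.
by rewrite Z_var ES_cst ?divr_ge0 // -EFinM -EFinD.
Qed.

End Claims.

End Main.

Theorem theorem1 (R : realType) (S : finType) (p q : seq S -> R) :
  is_distr p -> is_distr q -> abs_cont p q ->
  (Eq_W p q (fun w : R => (w ^+ 4)%R) < +oo)%E ->
  exists C : R, exists N0 : nat, forall N : nat, (N0 <= N)%N ->
    [/\ (norm1 (fun x => (pbar p q N x - p x)%R)
           <= (C * Num.sqrt ((1 + fine (chi2 p q)) / N%:R))%:E)%E,
        (norm2sq (fun x => (pbar p q N x - p x)%R)
           <= (C * ((1 + fine (chi2 p q)) / N%:R))%:E)%E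
      & (Esample q (fun s : {ffun 'I_N -> seq S} =>
            norm2sq (fun x => (phat p q s x - p x)%R))
           <= (C * ((1 + fine (chi2 p q)) / N%:R))%:E)%E].
Proof.
move=> hp hq hac h4.
have [c20 [ec2 [M2 [eM2 hM2]]]] := moments hp hq h4.
move: c20 hM2; set c2 := fine (chi2 p q) => c20 hM2.
exists 8, 1%N => N N0.
have Np : 0 < (N%:R : R) by rewrite ltr0n.
set a := (1 + c2) / N%:R.
have a0 : 0 < a by rewrite divr_gt0 // ltr_pwDl.
set r := Num.sqrt a.
have r0 : 0 < r by rewrite sqrtr_gt0.
have rr : r * r = a by rewrite -expr2 sqr_sqrtr // ltW.
have hMa : (M2 - 1) / N%:R <= 2 * (r * r).
  rewrite rr /a mulrA ler_pM2r ?invr_gt0 //; lra.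
have h1 := claim1 hp hq hac N0 eM2 r0.
have hB : (norm1 (fun x => (pbar p q N x - p x)%R) <= (3 / 2 * r)%:E)%E.
  apply: (le_trans h1); rewrite lee_fin.
  have : (2 * r)^-1 * ((M2 - 1) / N%:R) <= (2 * r)^-1 * (2 * (r * r)).
    by apply: ler_wpM2l => //; rewrite invr_ge0 mulr_ge0 // ltW.
  have -> : (2 * r)^-1 * (2 * (r * r)) = r by field; rewrite gt_eqF.
  lra.
split.
- apply: (le_trans hB); rewrite lee_fin ler_wpM2r ?ltW //; lra.
- apply: (le_trans (claim2_gen hB)); rewrite lee_fin -rr.
  have := mulr_gt0 r0 r0; nra.
- apply: (le_trans (claim3 hp hq hac N0 eM2)); rewrite lee_fin /a.
  rewrite !mulrA ler_pM2r ?invr_gt0 //; lra.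
Qed.
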